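(* Let $\delta\in\mathcal D^0$ and let $C$ be an absolutely continuous copula with multidiagonal $\delta$ and density $c$. Then $c(u)\mathbf 1_{Z_\delta}(u)=0$ for a.e. $u\in I^d$, where $Z_\delta=\{u\in I^d:\ \delta'_{(i)}(u_{(i)})=0\text{ for some }1\le i\le d\}$.
   Context: $I=[0,1]$; $u_{(1)}\le\dots\le u_{(d)}$ denote the ordered coordinates of $u$. A copula is a cdf on $\mathbb R^d$ with uniform-on-$I$ coordinates. For a copula $C$ and $U\sim C$ with order statistics $U_{(i)}$, the multidiagonal is $(\delta_{(i)})$ with $\delta_{(i)}(t)=\mathbb P(U_{(i)}\le t)$; each $\delta_{(i)}$ is Lipschitz, hence differentiable a.e. $\mathcal D^0$ is the set of multidiagonals of absolutely continuous copulas. *)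

(* Defs.v *)
From mathcomp Require Import all_boot all_order all_algebra.
From mathcomp Require Import all_classical all_reals all_analysis.
Set Implicit Arguments. Unset Strict Implicit. Unset Printing Implicit Defensive.
Import Order.TTheory GRing.Theory Num.Theory.
Local Open Scope classical_set_scope.
Local Open Scope ring_scope.

(* Points of R^d are d-tuples of reals, with the product Borel sigma-algebra
   (library instance on n.-tuple T). *)

(* i-th order statistic (0-indexed) of u : the i-th smallest coordinate. *)
Definition ostat (R : realType) (d : nat) (u : d.-tuple R) (i : 'I_d) : R :=
  nth 0 (sort <=%R (val u)) i.

Definition box (R : realType) (d : nat) (a b : d.-tuple R) : set (d.-tuple R) :=
  [set u | forall i : 'I_d, a`_i < u`_i <= b`_i]
  .

(* lam is (a version of) d-dimensional Lebesgue measure: it gives each box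
   its volume.  (On the product Borel sigma-algebra this determines lam
   uniquely.) *)
Definition is_lebesgue_d (R : realType) (d : nat)
  (lam : {measure set (d.-tuple R) -> \bar R}) : Prop :=
  forall a b : d.-tuple R, (forall i : 'I_d, a`_i <= b`_i) ->
    lam (box a b) = (\prod_(i < d) (b`_i - a`_i))%:E.

Definition cdf_of (R : realType) (d : nat) (mu : probability (d.-tuple R) R)
  (u : d.-tuple R) : R :=
  fine (mu [set x | forall i : 'I_d, x`_i <= u`_i]).

Definition uniform_marginals (R : realType) (d : nat)
  (mu : probability (d.-tuple R) R) : Prop :=
  forall (j : 'I_d) (t : R),
    mu [set x | x`_j <= t] = (Num.min (Num.max t 0) 1)%:E.

(* C is a copula: the cdf of a probability measure mu on R^d with
   uniform-on-I marginals (mu is then the law of U ~ C). *)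
Definition copula_law (R : realType) (d : nat) (C : d.-tuple R -> R)
  (mu : probability (d.-tuple R) R) : Prop :=
  C = cdf_of mu /\ uniform_marginals mu.

Definition is_density (R : realType) (d : nat)
  (lam : {measure set (d.-tuple R) -> \bar R})
  (mu : probability (d.-tuple R) R) (c : d.-tuple R -> R) : Prop :=
  measurable_fun setT c /\ (forall u, 0 <= c u) /\
  forall A : set (d.-tuple R), measurable A ->
    mu A = (\int[lam]_(x in A) (c x)%:E)%E.

Definition multidiag (R : realType) (d : nat)
  (mu : probability (d.-tuple R) R) (i : 'I_d) (t : R) : R :=
  fine (mu [set u | ostat u i <= t]).

Definition cube (R : realType) (d : nat) : set (d.-tuple R) :=
  [set u | forall i : 'I_d, 0 <= u`_i <= 1].

Definition Zset (R : realType) (d : nat) (delta : 'I_d -> R -> R)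
  : set (d.-tuple R) :=
  [set u | cube u /\ exists i : 'I_d,
     derivable (delta i) (ostat u i) 1 /\ derive1 (delta i) (ostat u i) = 0].

(* Main.v *)
Require Import Defs.
From mathcomp Require Import all_boot all_order all_algebra.
From mathcomp Require Import all_classical all_reals all_analysis.
From mathcomp Require Import measurable_realfun.
From mathcomp Require Import lra.
Import Order.TTheory GRing.Theory Num.Theory.
Local Open Scope classical_set_scope.
Local Open Scope ring_scope.

Lemma deriv0_small (R : realType) (f : R -> R) x :
  derivable f x 1 -> derive1 f x = 0 ->
  forall e, 0 < e -> exists2 dl, 0 < dl &
    forall s, `|s - x| < dl -> `|f s - f x| <= e * `|s - x|.
Proof.
move=> Hd H0 e e0.
have hc : (fun h : R => h^-1 *: (f (h + x) - f x)) @ 0^' --> derive1 f x.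
  rewrite derive1E.
  have -> : (fun h : R => h^-1 *: (f (h + x) - f x)) =
     (fun h : R => h^-1 *: ((f \o shift x) (h *: (1:R)) - f x)).
    by apply: funext => h /=; rewrite /GRing.scale /= mulr1.
  exact: Hd.
rewrite H0 in hc.
have Hn0 := proj1 (cvgr0Pnorm_lt _) hc e e0.
have Hn1 : \forall h \near (0:R^o), h != 0 -> `|h^-1 *: (f (h + x) - f x)| < e.
  by apply: Hn0; exact: dnbhs_filter.
have [dl /= dl0 Hdl] := proj1 nbhs_norm0P Hn1.
exists dl => // s sx.
have [->|sxne] := eqVneq s x; first by rewrite !subrr normr0 mulr0 lexx.
have hne : s - x != 0 by rewrite subr_eq0.
have := Hdl (s - x) sx hne.
rewrite /= subrK normrM normfV => /ltW.
rewrite mulrC ler_pdivrMr ?normr_gt0 //.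
Qed.

Lemma nth_sorted_le (R : realType) (l : seq R) (i : nat) (t : R) :
  sorted <=%R l -> (i < size l)%N ->
  (nth 0 l i <= t) = (i < count (fun x : R => (x <= t)%R) l)%N.
Proof.
elim: l i => [|x l IH] i //= Hs Hi.
have Hl : sorted <=%R l by move: Hs; case: l {IH Hi} => //= y l /andP[].
have Hall : all (fun y => x <= y) l.
  by apply: (order_path_min (@le_trans _ R)).
case: (leP x t) => xt /=.
  case: i Hi => [|i] Hi //=.
  by rewrite IH.
have c0 : count (fun y => y <= t) l = 0%N.
  rewrite (eq_in_count (a2 := pred0)) ?count_pred0 // => y /(allP Hall) xy.
  by apply/negbTE; rewrite -ltNge (lt_le_trans xt xy).
rewrite c0; case: i Hi => [|i] Hi /=; first by apply/negbTE; rewrite -ltNge.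
apply/negbTE; rewrite -ltNge; apply: (lt_le_trans xt).
by apply: (allP Hall); apply: mem_nth.
Qed.

Lemma ostat_le (R : realType) d (u : d.-tuple R) (i : 'I_d) t :
  (ostat u i <= t) = (i < count (fun x : R => (x <= t)%R) u)%N.
Proof.
rewrite /ostat nth_sorted_le.
- have /permP -> // : perm_eq (sort <=%R (val u)) u by rewrite perm_sort.
- exact: (sort_sorted (@le_total _ R)).
- by rewrite size_sort size_tuple.
Qed.

Lemma count_sum (R : realType) d (u : d.-tuple R) t :
  (count (fun x : R => (x <= t)%R) u)%:R =
  \sum_(j < d) (\1_[set v : d.-tuple R | tnth v j <= t] u : R).
Proof.
rewrite -sum1_count big_mkcond /= big_tuple natr_sum.
apply: eq_bigr => j _; rewrite indicE; case: ifP => H; rewrite /=.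
- by rewrite mem_set.
- by rewrite memNset //= H.
Qed.

Lemma ostat_meas (R : realType) d (i : 'I_d) (t : R) :
  measurable [set u : d.-tuple R | ostat u i <= t].
Proof.
have mh : measurable_fun setT
    (fun u : d.-tuple R => \sum_(j < d) (\1_[set v : d.-tuple R | tnth v j <= t] u : R)).
  apply: measurable_sum => j; apply: measurable_indic.
  have := @measurable_tnth _ R d j measurableT _ (@measurable_itv R `]-oo, t]).
  by rewrite setTI; congr measurable; apply/seteqP; split => v /=; rewrite in_itv.
have := mh measurableT _ (@measurable_itv R `]i%:R, +oo[).
rewrite setTI; congr measurable; apply/seteqP; split => u /=.
- by rewrite in_itv /= andbT -count_sum ltr_nat ostat_le.
- by rewrite ostat_le -(ltr_nat R) count_sum in_itv /= andbT.
Qed.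

Lemma eqle_trans (R : realType) (x y z : \bar R) : x = y -> (y <= z)%E -> (x <= z)%E.
Proof. by move=> ->. Qed.

Section generic.
Context dT (T : measurableType dT) (R : realType) (mu : probability T R) (g : T -> R).
Hypothesis mg : forall t, measurable [set x | g x <= t].

Definition FF t := fine (mu [set x | g x <= t]).

Lemma muS t : mu [set x | g x <= t] = (FF t)%:E.
Proof. by rewrite /FF fineK // fin_num_measure. Qed.

Lemma mIv a b : measurable [set x | a < g x <= b].
Proof.
have -> : [set x | a < g x <= b] = [set x | g x <= b] `\` [set x | g x <= a].
  apply/seteqP; split => x /=; rewrite ltNge; first by case/andP => /negP.
  by case => -> /negP ->.
exact: measurableD.
Qed.

Lemma muI a b : a <= b -> mu [set x | a < g x <= b] = (FF b - FF a)%:E.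
Proof.
move=> ab.
have -> : [set x | a < g x <= b] = [set x | g x <= b] `\` [set x | g x <= a].
  apply/seteqP; split => x /=; rewrite ltNge; first by case/andP => /negP.
  by case => -> /negP ->.
rewrite measureD //; last by rewrite -ge0_fin_numE ?measure_ge0 // fin_num_measure.
rewrite setIidr; last by move=> x /= xa; apply: le_trans ab.
by rewrite EFinB -(muS b) -(muS a).
Qed.

Definition good (e dl t : R) := 0 <= t <= 1 /\
  forall s, `|s - t| < dl -> `|FF s - FF t| <= e * `|s - t|.

Lemma cover (e : R) (n : nat) : 0 < e -> exists U : set T,
  [/\ measurable U, (mu U <= (4 * e)%:E)%E &
      [set x | good e n.+1%:R^-1 (g x)] `<=` U].
Proof.
move=> e0.
pose m := (n.+1).*2.
have m0 : (0 < m%:R :> R) by rewrite ltr0n /m double_gt0.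
have m1 : (1 <= m%:R :> R) by rewrite ler1n /m double_gt0.
have mn : m%:R^-1 < n.+1%:R^-1 :> R.
  rewrite ltf_pV2 ?posrE ?ltr0n // ltr_nat /m -addnn.
  by rewrite -[X in (X < _)%N]addn0 ltn_add2l.
pose P (j : nat) t := good e n.+1%:R^-1 t /\ j%:R / m%:R <= t < j.+1%:R / m%:R.
pose t0 j := xget 0 (P j).
pose G (j : nat) : set T := if pselect (exists t, P j t) is left _ then
  [set x | t0 j - m%:R^-1 < g x <= t0 j + m%:R^-1] else set0.
have mG j : measurable (G j) by rewrite /G; case: pselect => _ //; exact: mIv.
exists (\big[setU/set0]_(j < m.+1) G j); split.
- by apply: bigsetU_measurable => j _.
- have mU : measurable (\big[setU/set0]_(j < m.+1) G j).
    by apply: bigsetU_measurable => j _.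
  have HH := (@content_subadditive _ _ _ mu _ G m.+1 (fun k _ => mG k)
     mU (subset_refl _)).
  refine (le_trans (HH (fun x hx => hx)) _).
  apply: (@le_trans _ _ (\sum_(k < m.+1) (2 * e / m%:R)%:E)).
    apply: lee_sum => k _; rewrite /G; case: pselect => [ex|_]; last first.
      by rewrite measure0 lee_fin mulr_ge0 ?invr_ge0 ?mulr_ge0 ?ltW.
    have [[_ Hg] _] := xgetPex 0 ex.
    apply: eqle_trans.
      by apply: muI; rewrite /t0; have := ltW m0; rewrite -invr_ge0; lra.
    rewrite lee_fin.
    have h1 := Hg (t0 k + m%:R^-1).
    have h2 := Hg (t0 k - m%:R^-1).
    rewrite /t0 in h1 h2 *.
    rewrite addrAC subrr add0r in h1; rewrite addrAC subrr add0r normrN in h2.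
    have mi0 : 0 < m%:R^-1 :> R by rewrite invr_gt0.
    rewrite gtr0_norm // in h1 h2.
    have := h1 mn; have := h2 mn.
    have := ler_norm (FF (xget 0 (P k) + m%:R^-1) - FF (xget 0 (P k))).
    have := ler_norm (FF (xget 0 (P k)) - FF (xget 0 (P k) - m%:R^-1)).
    rewrite (distrC (FF (xget 0 (P k)))).
    have Hq : 2 * e / m%:R = e / m%:R + e / m%:R.
      by rewrite -mulrDl; congr (_ / _); lra.
    rewrite Hq.
    set q := e / m%:R.
    lra.
  rewrite sumEFin lee_fin sumr_const card_ord -mulr_natl.
  set q := 2 * 1 * e / m%:R.
  have hq : q * m%:R = 2 * e by rewrite /q mulr1 divfK // gt_eqF.
  have hq0 : 0 <= q by rewrite /q mulr1 divr_ge0 ?mulr_ge0 ?ltW.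
  rewrite -[q *+ _]mulr_natr -natr1; nra.
- move=> x Hx; have [/andP[t0' t1] _] := Hx.
  pose j := Num.truncn (g x * m%:R).
  have /andP[jl jr] := truncn_itv (mulr_ge0 t0' (ltW m0)).
  have jm : (j < m.+1)%N.
    rewrite ltnS -(ler_nat R); apply: (le_trans jl).
    by rewrite -[leRHS]mul1r ler_wpM2r // ltW.
  have Pjt : P j (g x).
    split => //; rewrite ler_pdivrMr // ltr_pdivlMr //.
    by rewrite jl jr.
  rewrite -bigcup_mkord; exists j => //.
  rewrite /G; case: pselect => [ex|[]]; last by exists (g x).
  have [_ /andP[l1 l2]] := xgetPex 0 ex.
  move: Pjt => [_ /andP[l3 l4]].
  rewrite /t0 /=; move: l1 l2 l3 l4; rewrite -natr1 mulrDl mul1r.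
  move=> l1 l2 l3 l4; apply/andP; split; lra.
Qed.

Lemma small_le0 (x : R) : (forall k : nat, x <= 4 * k.+1%:R^-1) -> x <= 0.
Proof.
move=> H; rewrite leNgt; apply/negP => x0.
pose k := Num.truncn (4 / x).
have := H k; apply/negP; rewrite -ltNge.
have hk : 4 / x < k.+1%:R by apply: truncnS_gt.
have k0 : 0 < k.+1%:R :> R by rewrite ltr0n.
rewrite ltr_pdivrMr // mulrC -ltr_pdivrMr //.
Qed.

Lemma null_deriv0 : exists N : set T, [/\ measurable N, mu N = 0 &
  [set x | 0 <= g x <= 1 /\ derivable FF (g x) 1 /\ derive1 FF (g x) = 0]
  `<=` N].
Proof.
have : forall kn : nat * nat, exists U : set T, [/\ measurable U,
    (mu U <= (4 * kn.1.+1%:R^-1)%:E)%E &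
    [set x | good kn.1.+1%:R^-1 kn.2.+1%:R^-1 (g x)] `<=` U].
  by move=> [k n]; apply: cover; rewrite invr_gt0.
move=> /choice [U HU].
pose V k n := \bigcap_(p in [set p | (n <= p)%N]) U (k, p).
pose N := \bigcap_k \bigcup_n V k n.
have mV k n : measurable (V k n).
  apply: bigcap_measurable; first by exists n => /=.
  by move=> p _; case: (HU (k, p)).
have mUV k : measurable (\bigcup_n V k n).
  by apply: bigcupT_measurable => n; exact: mV.
exists N; split.
- by apply: bigcapT_measurable => k; exact: mUV.
- have Hk k : (mu N <= (4 * k.+1%:R^-1)%:E)%E.
    have sub : N `<=` \bigcup_n V k n by move=> x Nx; exact: Nx k I.
    have mN : measurable N by apply: bigcapT_measurable => k'; exact: mUV.
    apply: (le_trans (le_measure _ _ _ sub)); rewrite ?inE //.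
    have ndV : nondecreasing_seq (V k).
      move=> a b ab; apply/subsetPset => x Vx p /= bp; apply: Vx.
      exact: leq_trans ab bp.
    have cv := @nondecreasing_cvg_mu _ _ _ mu _ (mV k) (mUV k) ndV.
    apply: eqle_trans; first exact: (esym (cvg_lim _ cv)).
    apply: lime_le; first by apply/cvg_ex; eexists; exact: cv.
    apply: nearW => p /=.
    have [mUp HUp _] := HU (k, p).
    apply: le_trans HUp.
    apply: le_measure; rewrite ?inE //.
    by apply: bigcap_inf => /=.
  have fin : mu N \is a fin_num by rewrite fin_num_measure // ; apply: bigcapT_measurable => k'; exact: mUV.
  have H0 : fine (mu N) <= 0.
    by apply: small_le0 => k; rewrite -lee_fin fineK.
  have H1 : 0 <= fine (mu N) by apply: fine_ge0; exact: measure_ge0.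
  transitivity ((fine (mu N))%:E); first by rewrite fineK.
  by congr EFin; apply/le_anti; rewrite H0 H1.
- move=> x [t01 [Hd H0]] k _.
  have ek : 0 < k.+1%:R^-1 :> R by rewrite invr_gt0 ltr0n.
  have [dl dl0 Hdl] := @deriv0_small R FF (g x) Hd H0 _ ek.
  pose n := Num.truncn (dl^-1).
  have ndl : n.+1%:R^-1 < dl.
    by rewrite -[dl]invrK ltf_pV2 ?posrE ?invr_gt0 ?ltr0n // truncnS_gt.
  exists n => // p /= np.
  have [_ _ HUp] := HU (k, p); apply: HUp; split => //= s hs; apply: Hdl.
  apply: (lt_le_trans hs); apply: (le_trans _ (ltW ndl)).
  by rewrite lef_pV2 ?posrE ?ltr0n // ler_nat ltnS.
Qed.

End generic.

Lemma ostat_cube (R : realType) d (u : d.-tuple R) (i : 'I_d) :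
  cube u -> 0 <= ostat u i <= 1.
Proof.
move=> cu.
have hin : ostat u i \in (val u).
  rewrite /ostat -(mem_sort <=%R); apply: mem_nth.
  by rewrite size_sort size_tuple.
have hj : (index (ostat u i) u < d)%N.
  have := index_mem (ostat u i) u; rewrite size_tuple => ->; exact: hin.
have := cu (Ordinal hj); rewrite /= nth_index //.
Qed.

Theorem mainTheorem16 (R : realType) (d : nat)
  (lam : {measure set (d.-tuple R) -> \bar R})
  (C : d.-tuple R -> R) (mu : probability (d.-tuple R) R)
  (c : d.-tuple R -> R) :
  is_lebesgue_d lam ->
  copula_law C mu ->
  is_density lam mu c ->
  {ae lam, forall u, c u * \1_(Zset (multidiag mu)) u = 0}.
Proof.
move=> _ _ [mc [c0 Hc]].
have Hi : forall i : 'I_d, exists N : set (d.-tuple R), [/\ measurable N, mu N = 0 &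
    [set u | cube u /\ derivable (multidiag mu i) (ostat u i) 1 /\
       derive1 (multidiag mu i) (ostat u i) = 0] `<=` N].
  move=> i.
  have [N [mN N0 sub]] := @null_deriv0 _ _ R mu (fun u => ostat u i) (@ostat_meas R d i).
  exists N; split => // u [cu [Hd H0]]; apply: sub; split => //.
  exact: ostat_cube.
have [Nf HNf] := choice Hi.
pose F (k : nat) : set (d.-tuple R) := if insub k is Some i then Nf i else set0.
have nF k : mu.-negligible (F k).
  rewrite /F; case: insubP => [i _ _|_]; last exact: negligible_set0.
  by have [mN N0 _] := HNf i; exists (Nf i); split.
have [A [mA A0 FA]] := negligible_bigcup nF.
have ZA : Zset (multidiag mu) `<=` A.
  move=> u [cu [i [Hd H0]]]; apply: FA; exists (val i) => //.
  rewrite /F valK; have [_ _ sub] := HNf i; exact: sub.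
have mf : measurable_fun A (fun x => (c x)%:E).
  by apply/measurable_EFinP; exact: (measurable_funS measurableT).
have Hint : (\int[lam]_(x in A) `|(c x)%:E| = 0)%E.
  transitivity (\int[lam]_(x in A) (c x)%:E)%E.
    by apply: eq_integral => x _; rewrite gee0_abs // lee_fin.
  rewrite -(Hc A mA); exact: A0.
have Hae := proj1 (ae_eq_integral_abs lam mA mf) Hint.
apply: filterS Hae => u Hu.
rewrite indicE; case: (pselect (Zset (multidiag mu) u)) => Zu.
  have cu0 : c u = 0 by apply/EFin_inj; exact: Hu (ZA u Zu).
  by rewrite cu0 mul0r.
by rewrite memNset // mulr0.
Qed.
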